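(* For $n\geq 1$, $$\sum_{\pi\in\mathfrak{S}_n(2413,3142)}t^{\mathrm{des}(\pi)}=\sum_{T\in \mathfrak{D}\mathfrak{T}_n} t^{n_\ominus(T)}.$$
   Context: $\mathfrak{S}_n(2413,3142)$ is the set of permutations of $[n]$ avoiding the patterns $2413$ and $3142$; $\mathrm{des}(\pi)=\#\{i\in[n-1]:\pi_i>\pi_{i+1}\}$. A binary tree is either empty or consists of a root together with a left subtree and a right subtree, both binary trees. A right chain of a binary tree is a maximal sequence of nodes $v_1,\dots,v_l$ in which $v_1$ is either the root or a left child and each $v_{j+1}$ is the right child of $v_j$. A di-sk tree is a binary tree whose nodes are labelled $\oplus$ or $\ominus$ such that along every right chain the labels alternate. $\mathfrak{D}\mathfrak{T}_n$ is the set of di-sk trees with $n-1$ nodes (for $n=1$ only the empty tree), and $n_\ominus(T)$ is the number of nodes labelled $\ominus$. *)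

(* Defs.v *)
From HB Require Import structures.
From mathcomp Require Import all_boot all_order all_algebra all_fingroup.
Set Implicit Arguments. Unset Strict Implicit. Unset Printing Implicit Defensive.

Definition contains2413 n (p : 'S_n) : bool :=
  [exists a : 'I_n, exists b : 'I_n, exists c : 'I_n, exists d : 'I_n,
     [&& a < b, b < c, c < d, p c < p a, p a < p d & p d < p b]].

Definition contains3142 n (p : 'S_n) : bool :=
  [exists a : 'I_n, exists b : 'I_n, exists c : 'I_n, exists d : 'I_n,
     [&& a < b, b < c, c < d, p b < p d, p d < p a & p a < p c]].

Definition avoids_2413_3142 n (p : 'S_n) : bool :=
  ~~ contains2413 p && ~~ contains3142 p.

Definition des n (p : 'S_n) : nat :=
  #|[set i : 'I_n | [exists j : 'I_n, (val j == (val i).+1) && (p j < p i)]]|.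

(* binary trees whose nodes carry a label: true = ominus, false = oplus *)
Inductive btree : Type :=
| Leaf : btree
| Node : btree -> bool -> btree -> btree.

Fixpoint nnodes (t : btree) : nat :=
  match t with Leaf => 0 | Node l _ r => (nnodes l + nnodes r).+1 end.

Fixpoint n_ominus (t : btree) : nat :=
  match t with Leaf => 0 | Node l a r => (n_ominus l + n_ominus r + a) end.

(* labels alternate along every right chain, i.e. every node and its
   right child carry different labels *)
Fixpoint is_disk (t : btree) : bool :=
  match t with
  | Leaf => true
  | Node l a r =>
      [&& is_disk l, is_disk r &
          match r with Leaf => true | Node _ b _ => a != b end]
  end.

(* all labelled binary trees with exactly k nodes (fuel f >= k) *)
Fixpoint trees_fuel (f k : nat) : seq btree :=
  match f with
  | 0 => if k is 0 then [:: Leaf] else [::]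
  | f'.+1 =>
      match k with
      | 0 => [:: Leaf]
      | k'.+1 =>
          flatten [seq flatten [seq flatten [seq [seq Node l a r | r <- trees_fuel f' (k' - i)]
                                             | a <- [:: false; true]]
                                | l <- trees_fuel f' i]
                  | i <- iota 0 k]
      end
  end.

Definition all_trees (k : nat) : seq btree := trees_fuel k k.

Definition disk_trees (n : nat) : seq btree := [seq t <- all_trees n.-1 | is_disk t].

Example trees_count : [seq size (all_trees k) | k <- iota 0 5] = [:: 1; 2; 8; 40; 224]%N.
Proof. by vm_compute. Qed.
Example all_sizes : all (fun k => all (fun t => nnodes t == k) (all_trees k)) (iota 0 5).
Proof. by vm_compute. Qed.
Example disk_count : [seq size (disk_trees k) | k <- iota 1 5] = [:: 1; 2; 6; 22; 90]%N.
Proof. by vm_compute. Qed.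

(* Main.v *)
Require Import Defs.
From HB Require Import structures.
From mathcomp Require Import all_boot all_order all_algebra all_fingroup.
From mathcomp Require Import zify.
From Stdlib Require Import Classical.

Lemma perm_iota (s : seq nat) n :
  uniq s -> size s = n -> (forall x, x \in s -> x < n) -> perm_eq s (iota 0 n).
Proof.
move=> us ss hs; apply: uniq_perm => //; first exact: iota_uniq.
have sub : {subset s <= iota 0 n} by move=> x /hs; rewrite mem_iota.
have hsz : size (iota 0 n) <= size s by rewrite size_iota ss.
by have [_ h] := uniq_min_size us sub hsz.
Qed.

Definition nth0 (s : seq nat) i := nth 0 s i.

Definition occ (R : nat -> nat -> nat -> nat -> Prop) (s : seq nat) :=
  exists a b c d, [/\ a < b, b < c, c < d, d < size s &
     R (nth0 s a) (nth0 s b) (nth0 s c) (nth0 s d)].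

Definition R2413 (va vb vc vd : nat) := vc < va /\ va < vd /\ vd < vb.
Definition R3142 (va vb vc vd : nat) := vb < vd /\ vd < va /\ va < vc.

Definition sep s := ~ occ R2413 s /\ ~ occ R3142 s.

Definition pdec (s : seq nat) k := forall i j, i < k -> k <= j -> j < size s ->
  nth0 s i < nth0 s j.
Definition mdec (s : seq nat) k := forall i j, i < k -> k <= j -> j < size s ->
  nth0 s j < nth0 s i.

Definition shift c (s : seq nat) := map (addn c) s.

Lemma size_shift c s : size (shift c s) = size s.
Proof. exact: size_map. Qed.

Lemma nth_shift c s i : i < size s -> nth0 (shift c s) i = c + nth0 s i.
Proof. by move=> h; rewrite /nth0 (nth_map 0). Qed.

Definition shift_inv (R : nat -> nat -> nat -> nat -> Prop) :=
  forall c a b d e, R (c + a) (c + b) (c + d) (c + e) <-> R a b d e.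

Lemma R2413_inv : shift_inv R2413.
Proof. move=> c a b d e; rewrite /R2413; lia. Qed.
Lemma R3142_inv : shift_inv R3142.
Proof. move=> c a b d e; rewrite /R3142; lia. Qed.

Lemma occ_shift R c s : shift_inv R -> occ R (shift c s) <-> occ R s.
Proof.
move=> hR; split=> [[a [b [e [d [h1 h2 h3 h4 h5]]]]] | [a [b [e [d [h1 h2 h3 h4 h5]]]]]].
  rewrite size_shift in h4.
  exists a, b, e, d; split => //.
  rewrite !nth_shift in h5; try lia; by apply (hR c).
exists a, b, e, d; rewrite size_shift; split => //.
rewrite !nth_shift; try lia; by apply (hR c).
Qed.

Lemma occ_take R k s : occ R (take k s) -> occ R s.
Proof.
move=> [a [b [e [d [h1 h2 h3 h4 h5]]]]].
rewrite size_take in h4.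
have [hk hk'] : d < k /\ d < size s by move: h4; case: (ltnP k (size s)); lia.
exists a, b, e, d; split => //.
by rewrite /nth0 !nth_take in h5; try lia.
Qed.

Lemma occ_drop R k s : occ R (drop k s) -> occ R s.
Proof.
move=> [a [b [e [d [h1 h2 h3 h4 h5]]]]].
rewrite size_drop in h4.
exists (k + a), (k + b), (k + e), (k + d); split; try lia.
by rewrite /nth0 !nth_drop in h5.
Qed.

Lemma sep_take k s : sep s -> sep (take k s).
Proof. by move=> [h1 h2]; split=> /occ_take. Qed.
Lemma sep_drop k s : sep s -> sep (drop k s).
Proof. by move=> [h1 h2]; split=> /occ_drop. Qed.
Lemma sep_shift c s : sep (shift c s) <-> sep s.
Proof.
rewrite /sep; split=> [[h1 h2]|[h1 h2]]; split.
- by move=> /(occ_shift R2413 c s R2413_inv).2.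
- by move=> /(occ_shift R3142 c s R3142_inv).2.
- by move=> /(occ_shift R2413 c s R2413_inv).1.
- by move=> /(occ_shift R3142 c s R3142_inv).1.
Qed.


Lemma nth_rc1 s x i : i < size s -> nth0 (rcons s x) i = nth0 s i.
Proof. by move=> h; rewrite /nth0 nth_rcons h. Qed.
Lemma nth_rc2 s x : nth0 (rcons s x) (size s) = x.
Proof. by rewrite /nth0 nth_rcons ltnn eqxx. Qed.

Lemma bdec (P : nat -> Prop) k :
  (forall i, i < k -> P i) \/ (exists i, i < k /\ ~ P i).
Proof.
case: (classic (exists i, i < k /\ ~ P i)) => h; [by right|left].
move=> i hi; apply: NNPP => hn; apply: h; by exists i.
Qed.

Lemma key s : uniq s -> sep s -> 2 <= size s ->
  exists k, 0 < k < size s /\ (pdec s k \/ mdec s k).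
Proof.
elim/last_ind: s => [//|s' x IH] us hs.
rewrite size_rcons ltnS => hsz.
have us' : uniq s' by move: us; rewrite rcons_uniq => /andP[].
have xn : x \notin s' by move: us; rewrite rcons_uniq => /andP[].
remember (size s') as n eqn:nE.
have hne : forall i, i < n -> nth0 s' i <> x.
  move=> i hi heq; move/negP: xn; apply; by rewrite -heq; apply: mem_nth; rewrite -nE.
have E1 : forall i, i < n -> nth0 (rcons s' x) i = nth0 s' i by move=> i; rewrite nE; apply: nth_rc1.
have E2 : nth0 (rcons s' x) n = x by rewrite nE; apply: nth_rc2.
have szs : size (rcons s' x) = n.+1 by rewrite size_rcons nE.
have [hs1 hs2] := hs.
case: (ltnP n 2) => hn.
  exists 1; split; first by rewrite ?szs; lia.
  have hn1 : n = 1 by lia.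
  have h0 := hne 0 ltac:(lia).
  case: (ltnP (nth0 s' 0) x) => hc; [left|right] => i j hi hj hj2;
    rewrite ?szs in hj2; (have -> : i = 0 by lia); (have -> : j = n by lia);
    rewrite E2 E1; lia.
have hs' : sep s'.
  by have := sep_take n _ hs; rewrite nE -cats1 take_size_cat.
have [k [hk [pd|md]]] := IH us' hs' hn.
-
  have pdn : forall i j, i<k -> k<=j -> j<n -> nth0 s' i < nth0 s' j.
    by move=> i j a b c; apply: pd => //; rewrite -nE.
  case: (bdec (fun i => nth0 s' i < x) k) => [ha|[i0 [hi0 hni0]]].
    exists k; split; first by rewrite ?szs; lia.
    left => i j hi hj hj2; rewrite ?szs in hj2.
    rewrite (E1 i); last by lia.
    case: (ltnP j n) => hjn; first by rewrite E1 //; apply: pd => //; rewrite -nE.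
    (have -> : j = n by lia).
    by rewrite E2; apply: ha.
  have xi0 : x < nth0 s' i0 by have := hne i0 ltac:(lia); lia.
  case: (bdec (fun i => x < nth0 s' i) n) => [hb|[i1 [hi1 hni1]]].
    exists n; split; first by rewrite ?szs; lia.
    right => i j hi hj hj2; rewrite ?szs in hj2.
    (have -> : j = n by lia).
    by rewrite E2 E1 //; apply: hb.
  have i1x : nth0 s' i1 < x by have := hne i1 hi1; lia.
  have i1k : i1 < k.
    case: (ltnP i1 k) => // hh.
    have := pdn i0 i1 ltac:(lia) hh ltac:(lia); lia.
  case: (classic (exists i j, [/\ i < j, j < k, nth0 s' j < x & x < nth0 s' i]))
     => [[i [j [h1 h2 h3 h4]]]|hnp].
    exfalso; apply: hs2.
    exists i, j, k, n; rewrite szs; split; try lia.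
    rewrite /R3142 E2 !E1; try lia.
    have := pdn i k ltac:(lia) (leqnn k) ltac:(lia); lia.
  have exP : exists j, (j < k) && (x < nth0 s' j) by exists i0; apply/andP.
  case: (ex_minnP exP) => k' /andP[hk'k hxk'] hmin.
  have low : forall i, i < k' -> nth0 s' i < x.
    move=> i hi; have := hne i ltac:(lia).
    case: (ltnP x (nth0 s' i)) => hc; last by lia.
    have := hmin i; rewrite hc andbT; lia.
  have high : forall j, k' <= j -> j < k -> x < nth0 s' j.
    move=> j h1 h2; have := hne j ltac:(lia).
    case: (ltnP x (nth0 s' j)) => hc //.
    move=> hne'; have kj : k' < j.
      rewrite ltn_neqAle h1 andbT; apply/eqP => e; rewrite e in hxk'; lia.
    exfalso; apply: hnp; exists k', j; split; lia.
  have k'pos : 0 < k'.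
    case: (posnP k') => // h0; exfalso; apply: hnp.
    exists 0, i1; split; try lia.
    - case: (posnP i1) => // hi; rewrite hi h0 in i1x hxk'; lia.
    - by rewrite -h0.
  exists k'; split; first by lia.
  left => i j hi hj hj2; rewrite ?szs in hj2.
  rewrite (E1 i); last by lia.
  case: (ltnP j n) => hjn.
    rewrite E1 //; case: (ltnP j k) => hjk.
      have := low i hi; have := high j hj hjk; lia.
    apply: pdn => //; lia.
  (have -> : j = n by lia).
  by rewrite E2; apply: low.
-
  have mdn : forall i j, i<k -> k<=j -> j<n -> nth0 s' j < nth0 s' i.
    by move=> i j a b c; apply: md => //; rewrite -nE.
  case: (bdec (fun i => x < nth0 s' i) k) => [ha|[i0 [hi0 hni0]]].
    exists k; split; first by rewrite ?szs; lia.
    right => i j hi hj hj2; rewrite ?szs in hj2.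
    rewrite (E1 i); last by lia.
    case: (ltnP j n) => hjn; first by rewrite E1 //; apply: mdn.
    (have -> : j = n by lia).
    by rewrite E2; apply: ha.
  have xi0 : nth0 s' i0 < x by have := hne i0 ltac:(lia); lia.
  case: (bdec (fun i => nth0 s' i < x) n) => [hb|[i1 [hi1 hni1]]].
    exists n; split; first by rewrite ?szs; lia.
    left => i j hi hj hj2; rewrite ?szs in hj2.
    (have -> : j = n by lia).
    by rewrite E2 E1 //; apply: hb.
  have i1x : x < nth0 s' i1 by have := hne i1 hi1; lia.
  have i1k : i1 < k.
    case: (ltnP i1 k) => // hh.
    have := mdn i0 i1 ltac:(lia) hh ltac:(lia); lia.
  case: (classic (exists i j, [/\ i < j, j < k, x < nth0 s' j & nth0 s' i < x]))
     => [[i [j [h1 h2 h3 h4]]]|hnp].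
    exfalso; apply: hs1.
    exists i, j, k, n; rewrite szs; split; try lia.
    rewrite /R2413 E2 !E1; try lia.
    have := mdn i k ltac:(lia) (leqnn k) ltac:(lia); lia.
  have exP : exists j, (j < k) && (nth0 s' j < x) by exists i0; apply/andP.
  case: (ex_minnP exP) => k' /andP[hk'k hxk'] hmin.
  have low : forall i, i < k' -> x < nth0 s' i.
    move=> i hi; have := hne i ltac:(lia).
    case: (ltnP (nth0 s' i) x) => hc; last by lia.
    have := hmin i; rewrite hc andbT; lia.
  have high : forall j, k' <= j -> j < k -> nth0 s' j < x.
    move=> j h1 h2; have := hne j ltac:(lia).
    case: (ltnP (nth0 s' j) x) => hc //.
    move=> hne'; have kj : k' < j.
      rewrite ltn_neqAle h1 andbT; apply/eqP => e; rewrite e in hxk'; lia.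
    exfalso; apply: hnp; exists k', j; split; lia.
  have k'pos : 0 < k'.
    case: (posnP k') => // h0; exfalso; apply: hnp.
    exists 0, i1; split; try lia.
    - case: (posnP i1) => // hi; rewrite hi h0 in i1x hxk'; lia.
    - by rewrite -h0.
  exists k'; split; first by lia.
  right => i j hi hj hj2; rewrite ?szs in hj2.
  rewrite (E1 i); last by lia.
  case: (ltnP j n) => hjn.
    rewrite E1 //; case: (ltnP j k) => hjk.
      have := low i hi; have := high j hj hjk; lia.
    apply: mdn => //; lia.
  (have -> : j = n by lia).
  by rewrite E2; apply: low.
Qed.


Fixpoint perm_of (t : btree) : seq nat :=
  match t with
  | Leaf => [:: 0]
  | Node l a r =>
      let p := perm_of l in let q := perm_of r in
      if a then shift (size q) p ++ q else p ++ shift (size p) q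
  end.

Lemma perm_of_node l a r : perm_of (Node l a r) =
  if a then shift (size (perm_of r)) (perm_of l) ++ perm_of r
  else perm_of l ++ shift (size (perm_of l)) (perm_of r).
Proof. by []. Qed.

Lemma size_perm_of t : size (perm_of t) = (nnodes t).+1.
Proof.
elim: t => [//|l IHl a r IHr] /=.
by case: a; rewrite size_cat size_shift IHl IHr; lia.
Qed.

Lemma perm_of_perm t : perm_eq (perm_of t) (iota 0 (nnodes t).+1).
Proof.
elim: t => [//|l IHl a r IHr].
rewrite perm_of_node !size_perm_of.
have -> : (nnodes (Node l a r)).+1 = (nnodes l).+1 + (nnodes r).+1 by rewrite /=; lia.
have shI : forall c m, shift c (iota 0 m) = iota c m.
  by move=> c m; rewrite /shift -iotaDl addn0.
case: a.
- rewrite addnC iotaD add0n.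
  rewrite perm_catC; apply: perm_cat; first exact: IHr.
  by rewrite -shI; apply: perm_map.
- rewrite iotaD add0n; apply: perm_cat => //.
  by rewrite -shI; apply: perm_map.
Qed.

Lemma mem_perm_of t (x : nat) : x \in perm_of t -> x < (nnodes t).+1.
Proof. by rewrite (perm_mem (perm_of_perm t)) mem_iota. Qed.

Lemma uniq_perm_of t : uniq (perm_of t).
Proof. by rewrite (perm_uniq (perm_of_perm t)) iota_uniq. Qed.

Fixpoint des_seq (s : seq nat) : nat :=
  match s with
  | x :: t => (match t with y :: _ => y < x | [::] => false end) + des_seq t
  | [::] => 0
  end.

Lemma des_cat a b : a != [::] -> b != [::] ->
  des_seq (a ++ b) = des_seq a + des_seq b + (head 0 b < last 0 a).
Proof.
elim: a => [//|x a IH] _ hb.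
case: a IH => [|y a] IH.
  by clear IH; case: b hb => [//|z b] _ /=; lia.
rewrite cat_cons.
change (des_seq (x :: ((y::a) ++ b))) with ((y < x) + des_seq ((y::a) ++ b)).
rewrite IH //.
change (des_seq (x :: y :: a)) with ((y < x) + des_seq (y :: a)).
change (last 0 (x::y::a)) with (last 0 (y::a)). lia.
Qed.

Lemma des_shift c s : des_seq (shift c s) = des_seq s.
Proof.
elim: s => [//|x s IH] /=; rewrite IH.
by case: s {IH} => [//|y s] /=; rewrite ltn_add2l.
Qed.

Lemma perm_of_ne t : perm_of t != [::].
Proof. by rewrite -size_eq0 size_perm_of. Qed.

Lemma des_perm_of t : des_seq (perm_of t) = n_ominus t.
Proof.
elim: t => [//|l IHl a r IHr] /=.
have nel := perm_of_ne l; have ner := perm_of_ne r.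
case: a.
- rewrite des_cat ?des_shift ?IHl ?IHr //; last first.
    by case: (perm_of l) nel.
  have hq : head 0 (perm_of r) < size (perm_of r).
    rewrite size_perm_of; apply: mem_perm_of.
    by case: (perm_of r) ner => //= y q _; rewrite inE eqxx.
  have hp : size (perm_of r) <= last 0 (shift (size (perm_of r)) (perm_of l)).
    by case: (perm_of l) nel => //= y p _; rewrite last_map; lia.
  have -> : (head 0 (perm_of r) < last 0 (shift (size (perm_of r)) (perm_of l))) = true by lia.
  by [].
- rewrite des_cat ?des_shift ?IHl ?IHr //; last first.
    by case: (perm_of r) ner.
  have hp : last 0 (perm_of l) < size (perm_of l).
    rewrite size_perm_of; apply: mem_perm_of.
    by case: (perm_of l) nel => //= y q _; apply: mem_last.
  have hq : size (perm_of l) <= head 0 (shift (size (perm_of l)) (perm_of r)).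
    by case: (perm_of r) ner => //= y p _; lia.
  have -> : (head 0 (shift (size (perm_of l)) (perm_of r)) < last 0 (perm_of l)) = false by lia.
  by rewrite addn0.
Qed.

Lemma occ_cases R (s : seq nat) m : occ R s -> occ R (take m s) \/ occ R (drop m s) \/
  exists a b c d, [/\ a < b, b < c, c < d, d < size s &
     R (nth0 s a) (nth0 s b) (nth0 s c) (nth0 s d)] /\ a < m <= d.
Proof.
move=> [a [b [c [d [h1 h2 h3 h4 h5]]]]].
case: (ltnP d m) => hd.
  left; exists a, b, c, d; rewrite size_take; split; try lia.
    by case: (ltnP m (size s)); lia.
  by rewrite /nth0 !nth_take //; lia.
case: (leqP m a) => ha.
  right; left; exists (a - m), (b - m), (c - m), (d - m); rewrite size_drop; split; try lia.
  by rewrite /nth0 !nth_drop !subnKC //; lia.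
right; right; exists a, b, c, d; split => //; lia.
Qed.

Lemma sep_cat_p s m : pdec s m -> sep (take m s) -> sep (drop m s) -> sep s.
Proof.
move=> pd [t1 t2] [d1 d2]; split=> /(occ_cases _ _ m)
  [//|[//|[a [b [c [d [[h1 h2 h3 h4 h5] hm]]]]]]].
- case: (leqP m c) => hc.
    have := pd a c ltac:(lia) hc ltac:(lia); move: h5; rewrite /R2413; lia.
  have := pd b d ltac:(lia) ltac:(lia) h4; move: h5; rewrite /R2413; lia.
- case: (leqP m b) => hb.
    have := pd a b ltac:(lia) hb ltac:(lia); move: h5; rewrite /R3142; lia.
  have := pd a d ltac:(lia) ltac:(lia) h4; move: h5; rewrite /R3142; lia.
Qed.

Lemma sep_cat_m s m : mdec s m -> sep (take m s) -> sep (drop m s) -> sep s.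
Proof.
move=> pd [t1 t2] [d1 d2]; split=> /(occ_cases _ _ m)
  [//|[//|[a [b [c [d [[h1 h2 h3 h4 h5] hm]]]]]]].
- case: (leqP m b) => hb.
    have := pd a b ltac:(lia) hb ltac:(lia); move: h5; rewrite /R2413; lia.
  have := pd a d ltac:(lia) ltac:(lia) h4; move: h5; rewrite /R2413; lia.
- case: (leqP m c) => hc.
    have := pd a c ltac:(lia) hc ltac:(lia); move: h5; rewrite /R3142; lia.
  have := pd b d ltac:(lia) ltac:(lia) h4; move: h5; rewrite /R3142; lia.
Qed.

Lemma pdec_plus (p q : seq nat) : (forall x : nat, x \in p -> x < size p) ->
  pdec (p ++ shift (size p) q) (size p).
Proof.
move=> hp i j hi hj hj2; rewrite size_cat size_shift in hj2.
rewrite /nth0 !nth_cat hi (_ : j < size p = false) /=; last by apply/negbTE; rewrite -leqNgt.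
rewrite (nth_map 0); last by lia.
have := hp (nth 0 p i) (mem_nth _ hi); lia.
Qed.

Lemma mdec_minus (p q : seq nat) : (forall x : nat, x \in q -> x < size q) ->
  mdec (shift (size q) p ++ q) (size p).
Proof.
move=> hq i j hi hj hj2; rewrite size_cat size_shift in hj2.
rewrite /nth0 !nth_cat size_shift hi (_ : j < size p = false) /=; last by apply/negbTE; rewrite -leqNgt.
rewrite (nth_map 0); last by lia.
have hh : j - size p < size q by lia.
have h2 : nth 0 q (j - size p) < size q := hq _ (mem_nth 0 hh). lia.
Qed.

Lemma mem_perm_of' t (x : nat) : x \in perm_of t -> x < size (perm_of t).
Proof. by rewrite size_perm_of; apply: mem_perm_of. Qed.

Lemma sep_perm_of t : sep (perm_of t).
Proof.
elim: t => [|l IHl a r IHr].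
  by split; move=> [a [b [c [d [h1 h2 h3 h4 h5]]]]] /=; move: h4 => /=; lia.
rewrite perm_of_node; case: a.
- apply: (sep_cat_m _ (size (perm_of l))).
    by apply: mdec_minus; apply: mem_perm_of'.
  + by rewrite -(size_shift (size (perm_of r))) take_size_cat //; apply/sep_shift.
  + by rewrite -(size_shift (size (perm_of r))) drop_size_cat.
- apply: (sep_cat_p _ (size (perm_of l))).
    by apply: pdec_plus; apply: mem_perm_of'.
  + by rewrite take_size_cat.
  + by rewrite drop_size_cat //; apply/sep_shift.
Qed.


Lemma no_pm (s : seq nat) k k' : pdec s k -> mdec s k' -> 0 < k < size s -> 0 < k' < size s -> False.
Proof.
move=> pd md h1 h2.
have := pd 0 (size s).-1 ltac:(lia) ltac:(lia) ltac:(lia).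
have := md 0 (size s).-1 ltac:(lia) ltac:(lia) ltac:(lia).
lia.
Qed.

Lemma pdec_drop (s : seq nat) k1 k2 : pdec s k2 -> k1 <= k2 -> pdec (drop k1 s) (k2 - k1).
Proof.
move=> pd h i j hi hj hj2; rewrite size_drop in hj2.
rewrite /nth0 !nth_drop; apply: pd; lia.
Qed.

Lemma mdec_drop (s : seq nat) k1 k2 : mdec s k2 -> k1 <= k2 -> mdec (drop k1 s) (k2 - k1).
Proof.
move=> pd h i j hi hj hj2; rewrite size_drop in hj2.
rewrite /nth0 !nth_drop; apply: pd; lia.
Qed.

Lemma pdec_comb (s : seq nat) K k : pdec s K -> pdec (drop K s) k -> pdec s (K + k).
Proof.
move=> p1 p2 i j hi hj hj2.
case: (ltnP i K) => hiK; first by apply: p1; lia.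
have := p2 (i - K) (j - K) ltac:(lia) ltac:(lia) ltac:(rewrite size_drop; lia).
have e1 : K + (i - K) = i by lia.
have e2 : K + (j - K) = j by lia.
by rewrite /nth0 !nth_drop e1 e2.
Qed.

Lemma mdec_comb (s : seq nat) K k : mdec s K -> mdec (drop K s) k -> mdec s (K + k).
Proof.
move=> p1 p2 i j hi hj hj2.
case: (ltnP i K) => hiK; first by apply: p1; lia.
have := p2 (i - K) (j - K) ltac:(lia) ltac:(lia) ltac:(rewrite size_drop; lia).
have e1 : K + (i - K) = i by lia.
have e2 : K + (j - K) = j by lia.
by rewrite /nth0 !nth_drop e1 e2.
Qed.

Lemma pdec_shift c (q : seq nat) k : pdec (shift c q) k <-> pdec q k.
Proof.
split=> pd i j hi hj hj2.
  have := pd i j hi hj ltac:(rewrite size_shift; lia).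
  rewrite !nth_shift; lia.
rewrite size_shift in hj2; rewrite !nth_shift; try lia.
by rewrite ltn_add2l; apply: pd.
Qed.

Lemma mdec_shift c (q : seq nat) k : mdec (shift c q) k <-> mdec q k.
Proof.
split=> pd i j hi hj hj2.
  have := pd i j hi hj ltac:(rewrite size_shift; lia).
  rewrite !nth_shift; lia.
rewrite size_shift in hj2; rewrite !nth_shift; try lia.
by rewrite ltn_add2l; apply: pd.
Qed.

Lemma perm_of_pdec l r : pdec (perm_of (Node l false r)) (size (perm_of l)).
Proof. by rewrite perm_of_node; apply: pdec_plus; apply: mem_perm_of'. Qed.

Lemma perm_of_mdec l r : mdec (perm_of (Node l true r)) (size (perm_of l)).
Proof. by rewrite perm_of_node; apply: mdec_minus; apply: mem_perm_of'. Qed.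

Lemma size_node_gt l a r : 0 < size (perm_of l) < size (perm_of (Node l a r)).
Proof. rewrite !size_perm_of /=; lia. Qed.

Lemma root_false l r k : is_disk (Node l false r) -> 0 < k < size (perm_of r) ->
  ~ pdec (perm_of r) k.
Proof.
case: r => [|l' b r'].
  by move=> _; rewrite size_perm_of /=; lia.
case: b => hd hk pd; last by move: hd => /and3P[_ _].
apply: (no_pm _ _ _ pd (perm_of_mdec l' r')) => //; exact: size_node_gt.
Qed.

Lemma root_true l r k : is_disk (Node l true r) -> 0 < k < size (perm_of r) ->
  ~ mdec (perm_of r) k.
Proof.
case: r => [|l' b r'].
  by move=> _; rewrite size_perm_of /=; lia.
case: b => hd hk md; first by move: hd => /and3P[_ _].
apply: (no_pm _ _ _ (perm_of_pdec l' r') md) => //; exact: size_node_gt.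
Qed.

Lemma shift_inj c : injective (shift c).
Proof. apply: inj_map; exact: addnI. Qed.

Lemma perm_of_inj t1 t2 : is_disk t1 -> is_disk t2 -> perm_of t1 = perm_of t2 -> t1 = t2.
Proof.
elim: t1 t2 => [|l1 IHl a1 r1 IHr] [|l2 a2 r2] //.
- move=> _ _ /(congr1 size); rewrite !size_perm_of /=; lia.
- move=> _ _ /(congr1 size); rewrite !size_perm_of /=; lia.
move=> d1 d2 E.
have dl1 : is_disk l1 by case/and3P: d1.
have dr1 : is_disk r1 by case/and3P: d1.
have dl2 : is_disk l2 by case/and3P: d2.
have dr2 : is_disk r2 by case/and3P: d2.
have sz1 := size_node_gt l1 a1 r1; have sz2 := size_node_gt l2 a2 r2.
rewrite E in sz1.
case: a1 a2 E d1 d2 sz1 sz2 => [] [] E d1 d2 sz1 sz2.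
-
  have m1 := perm_of_mdec l1 r1; have m2 := perm_of_mdec l2 r2.
  rewrite E in m1.
  set s := perm_of (Node l2 true r2) in E m1 m2 sz1 sz2.
  have es1 : drop (size (perm_of l1)) s = perm_of r1.
    by rewrite -E perm_of_node -(size_shift (size (perm_of r1))) drop_size_cat.
  have es2 : drop (size (perm_of l2)) s = perm_of r2.
    by rewrite /s perm_of_node -(size_shift (size (perm_of r2))) drop_size_cat.
  have eqk : size (perm_of l1) = size (perm_of l2).
    case: (ltngtP (size (perm_of l1)) (size (perm_of l2))) => // hlt.
    + have := mdec_drop _ _ _ m2 (ltnW hlt); rewrite es1 => md.
      exfalso; apply: (root_true _ _ _ d1 _ md); rewrite -es1 size_drop; lia.
    + have := mdec_drop _ _ _ m1 (ltnW hlt); rewrite es2 => md.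
      exfalso; apply: (root_true _ _ _ d2 _ md); rewrite -es2 size_drop; lia.
  have er : perm_of r1 = perm_of r2 by rewrite -es1 -es2 eqk.
  have et1 : take (size (perm_of l1)) s = shift (size (perm_of r1)) (perm_of l1).
    by rewrite -E perm_of_node -(size_shift (size (perm_of r1)) (perm_of l1)) take_size_cat.
  have et2 : take (size (perm_of l2)) s = shift (size (perm_of r2)) (perm_of l2).
    by rewrite /s perm_of_node -(size_shift (size (perm_of r2)) (perm_of l2)) take_size_cat.
  have el : perm_of l1 = perm_of l2.
    by apply: (@shift_inj (size (perm_of r1))); rewrite -et1 eqk et2 er.
  by rewrite (IHl l2) // (IHr r2).
- exfalso; apply: (no_pm _ _ _ (perm_of_pdec l2 r2) _ sz2 sz1).
  by rewrite -E; apply: perm_of_mdec.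
- exfalso; apply: (no_pm _ _ _ _ (perm_of_mdec l2 r2) sz1 sz2).
  by rewrite -E; apply: perm_of_pdec.
-
  have m1 := perm_of_pdec l1 r1; have m2 := perm_of_pdec l2 r2.
  rewrite E in m1.
  set s := perm_of (Node l2 false r2) in E m1 m2 sz1 sz2.
  have es1 : drop (size (perm_of l1)) s = shift (size (perm_of l1)) (perm_of r1).
    by rewrite -E perm_of_node drop_size_cat.
  have es2 : drop (size (perm_of l2)) s = shift (size (perm_of l2)) (perm_of r2).
    by rewrite /s perm_of_node drop_size_cat.
  have eqk : size (perm_of l1) = size (perm_of l2).
    case: (ltngtP (size (perm_of l1)) (size (perm_of l2))) => // hlt.
    + have := pdec_drop _ _ _ m2 (ltnW hlt); rewrite es1 => /pdec_shift pd.
      exfalso; apply: (root_false _ _ _ d1 _ pd); move: (congr1 size es1); rewrite size_shift size_drop; lia.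
    + have := pdec_drop _ _ _ m1 (ltnW hlt); rewrite es2 => /pdec_shift pd.
      exfalso; apply: (root_false _ _ _ d2 _ pd); move: (congr1 size es2); rewrite size_shift size_drop; lia.
  have el : perm_of l1 = perm_of l2.
    have et1 : take (size (perm_of l1)) s = perm_of l1 by rewrite -E perm_of_node take_size_cat.
    have et2 : take (size (perm_of l2)) s = perm_of l2 by rewrite /s perm_of_node take_size_cat.
    by rewrite -et1 -et2 eqk.
  have er : perm_of r1 = perm_of r2.
    by apply: (@shift_inj (size (perm_of l1))); rewrite -es1 {2}el -es2 eqk.
  by rewrite (IHl l2) // (IHr r2).
Qed.


Lemma maximal_ex (P : nat -> Prop) N k : P k -> (forall j, P j -> j < N) ->
  exists K, P K /\ (forall j, P j -> j <= K).
Proof.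
move=> Pk hb; apply: NNPP => hno.
have H : forall m, exists j, P j /\ k + m <= j.
  elim=> [|m [j [Pj hj]]]; first by exists k; rewrite addn0.
  have : ~ (forall j', P j' -> j' <= j) by move=> hh; apply: hno; exists j.
  move=> /not_all_ex_not [j' hj']; exists j'.
  have [Pj' hlt] : P j' /\ ~ (j' <= j).
    split; last by move=> hle; apply: hj' => _.
    apply: NNPP => hc; apply: hj' => hp; by case: hc.
  by split => //; move/negP: hlt; rewrite -ltnNge; lia.
have [j [Pj hj]] := H N; have := hb j Pj; lia.
Qed.

Lemma in_nth (s : seq nat) (x : nat) : x \in s -> exists i, i < size s /\ nth0 s i = x.
Proof. by move=> h; exists (index x s); rewrite index_mem /nth0 nth_index. Qed.

Lemma nth_in (s : seq nat) i : i < size s -> nth0 s i \in s.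
Proof. exact: mem_nth. Qed.

Lemma split_p (s : seq nat) N K : perm_eq s (iota 0 N) -> pdec s K -> K <= N ->
  [/\ perm_eq (take K s) (iota 0 K),
      drop K s = shift K (map (subn^~ K) (drop K s)) &
      perm_eq (map (subn^~ K) (drop K s)) (iota 0 (N - K))].
Proof.
move=> pe pd hK.
have us : uniq s by rewrite (perm_uniq pe) iota_uniq.
have ss : size s = N by rewrite (perm_size pe) size_iota.
have ms : forall x : nat, (x \in s) = (x < N) by move=> x; rewrite (perm_mem pe) mem_iota.
have pt : perm_eq (take K s) (iota 0 K).
  apply: perm_iota; first exact: take_uniq.
    by rewrite size_take ss; case: (ltnP K N); lia.
  move=> x xin.
  have [i [hi ei]] := in_nth _ _ xin.
  rewrite size_take ss in hi.
  have hiK : i < K by move: hi; case: (ltnP K N); lia.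
  have exs : x = nth0 s i by rewrite -ei /nth0 nth_take.
  have xN : x < N by rewrite -ms exs; apply: nth_in; lia.
  have sub : {subset iota 0 x.+1 <= take K s}.
    move=> y; rewrite mem_iota => /andP[_ hy].
    have yin : y \in s by rewrite ms; lia.
    have [j [hj ej]] := in_nth _ _ yin.
    case: (ltnP j K) => hjK.
      by rewrite -ej /nth0 -(nth_take 0 hjK); apply: mem_nth; rewrite size_take ss; case: (ltnP K N); lia.
    have := pd i j hiK hjK hj; rewrite ej -exs; lia.
  have := uniq_leq_size (iota_uniq 0 x.+1) sub.
  rewrite size_iota size_take ss; case: (ltnP K N); lia.
have hd : forall y : nat, y \in drop K s -> K <= y.
  move=> y yd; case: (leqP K y) => // hy; exfalso.
  have yt : y \in take K s by rewrite (perm_mem pt) mem_iota; lia.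
  move: us; rewrite -(cat_take_drop K s) cat_uniq => /and3P[_ /hasPn hn _].
  by move: (hn y yd); rewrite yt.
have ed : drop K s = shift K (map (subn^~ K) (drop K s)).
  rewrite /shift -map_comp -{1}(map_id (drop K s)); apply/esym/eq_in_map => y /hd hy /=; lia.
split => //.
have pd' : perm_eq (drop K s) (iota K (N - K)).
  have h1 : perm_eq (iota 0 K ++ drop K s) (take K s ++ drop K s).
    by rewrite perm_cat2r perm_sym.
  have := perm_trans h1; rewrite cat_take_drop => /(_ _ pe).
  by rewrite -{1}(subnKC hK) iotaD add0n perm_cat2l.
have -> : iota 0 (N - K) = map (subn^~ K) (iota K (N - K)).
  have e : iota K (N - K) = map (addn K) (iota 0 (N - K)) by rewrite -iotaDl addn0.
  rewrite e -map_comp -{1}(map_id (iota 0 (N - K))).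
  by apply: eq_map => y /=; lia.
exact: perm_map.
Qed.

Lemma split_m (s : seq nat) N K : perm_eq s (iota 0 N) -> mdec s K -> K <= N ->
  [/\ perm_eq (drop K s) (iota 0 (N - K)),
      take K s = shift (N - K) (map (subn^~ (N - K)) (take K s)) &
      perm_eq (map (subn^~ (N - K)) (take K s)) (iota 0 K)].
Proof.
move=> pe md hK.
have us : uniq s by rewrite (perm_uniq pe) iota_uniq.
have ss : size s = N by rewrite (perm_size pe) size_iota.
have ms : forall x : nat, (x \in s) = (x < N) by move=> x; rewrite (perm_mem pe) mem_iota.
have pdr : perm_eq (drop K s) (iota 0 (N - K)).
  apply: perm_iota; first exact: drop_uniq.
    by rewrite size_drop ss.
  move=> x xin.
  have [i [hi ei]] := in_nth _ _ xin.
  rewrite size_drop ss in hi.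
  have exs : x = nth0 s (K + i) by rewrite -ei /nth0 nth_drop.
  have xN : x < N by rewrite -ms exs; apply: nth_in; lia.
  have sub : {subset iota 0 x.+1 <= drop K s}.
    move=> y; rewrite mem_iota => /andP[_ hy].
    have yin : y \in s by rewrite ms; lia.
    have [j [hj ej]] := in_nth _ _ yin.
    case: (ltnP j K) => hjK.
      have := md j (K + i) hjK ltac:(lia) ltac:(lia); rewrite ej -exs; lia.
    have e : y = nth0 (drop K s) (j - K) by rewrite /nth0 nth_drop subnKC.
    by rewrite e; apply: nth_in; rewrite size_drop; lia.
  have := uniq_leq_size (iota_uniq 0 x.+1) sub.
  rewrite size_iota size_drop ss; lia.
have ht : forall y : nat, y \in take K s -> N - K <= y.
  move=> y yt; case: (leqP (N - K) y) => // hy; exfalso.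
  have yd : y \in drop K s by rewrite (perm_mem pdr) mem_iota; lia.
  move: us; rewrite -(cat_take_drop K s) cat_uniq => /and3P[_ /hasPn hn _].
  by move: (hn y yd); rewrite yt.
have et : take K s = shift (N - K) (map (subn^~ (N - K)) (take K s)).
  rewrite /shift -map_comp -{1}(map_id (take K s)); apply/esym/eq_in_map => y /ht hy /=; lia.
split => //.
have pt' : perm_eq (take K s) (iota (N - K) K).
  have h1 : perm_eq (take K s ++ iota 0 (N - K)) (take K s ++ drop K s).
    by rewrite perm_cat2l perm_sym.
  have := perm_trans h1; rewrite cat_take_drop => /(_ _ pe).
  have eN : iota 0 N = iota 0 (N - K) ++ iota (0 + (N - K)) K by rewrite -iotaD subnK.
  rewrite eN add0n => h2.
  by rewrite -(perm_cat2r (iota 0 (N - K))) (perm_trans h2) // perm_catC.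
have -> : iota 0 K = map (subn^~ (N - K)) (iota (N - K) K).
  have e : iota (N - K) K = map (addn (N - K)) (iota 0 K) by rewrite -iotaDl addn0.
  rewrite e -map_comp -{1}(map_id (iota 0 K)).
  by apply: eq_map => y /=; lia.
exact: perm_map.
Qed.

Lemma exists_tree n : forall s : seq nat, perm_eq s (iota 0 n.+1) -> sep s ->
  exists t, [/\ is_disk t, nnodes t = n & perm_of t = s].
Proof.
elim/ltn_ind: n => n IH s pe hs.
case: n IH pe => [|n] IH pe.
  have ss := perm_size pe.
  case: s pe hs ss => [|y [|z s]] //= pe _ _.
  have : y \in iota 0 1 by rewrite -(perm_mem pe) inE.
  rewrite mem_iota => hy; exists Leaf; split => //; congr (_ :: _); lia.
have us : uniq s by rewrite (perm_uniq pe) iota_uniq.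
have ss : size s = n.+2 by rewrite (perm_size pe) size_iota.
have [k [hk hpm]] := key s us hs ltac:(by rewrite ss).
move: hk; rewrite ss => hk; case: hpm => [pd|md].
- have Pk : 0 < k < n.+2 /\ pdec s k by split.
  have [K [[hK pdK] hmax]] := maximal_ex (fun K => 0 < K < n.+2 /\ pdec s K) (n.+2) k
     Pk (fun j hj => proj2 (andP (proj1 hj))).
  have [pt ed pb] := split_p s (n.+2) K pe pdK ltac:(lia).
  have pt' : perm_eq (take K s) (iota 0 K.-1.+1) by rewrite prednK //; lia.
  have [ta [da na ea]] := IH K.-1 ltac:(rewrite -subn1; lia) _ pt' (sep_take K s hs).
  set b := map (subn^~ K) (drop K s) in ed pb.
  have pb' : perm_eq b (iota 0 (n.+1 - K).+1) by rewrite -subSn //; lia.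
  have sb : sep b by apply/(sep_shift K); rewrite -ed; apply: sep_drop.
  have [tb [db nb eb]] := IH (n.+1 - K) ltac:(lia) _ pb' sb.
  exists (Node ta false tb); split.
  + rewrite /= da db /=.
    case: tb db nb eb => [|l' c r'] db nb eb //.
    case: c db nb eb => // db nb eb; exfalso.
    have p1 := perm_of_pdec l' r'; rewrite eb in p1.
    have p2 : pdec (drop K s) (size (perm_of l')) by rewrite ed; apply/pdec_shift.
    have p3 := pdec_comb _ _ _ pdK p2.
    have sz := size_node_gt l' false r'; rewrite eb /b size_map size_drop ss in sz.
    have hb : 0 < K + size (perm_of l') < n.+2 by lia.
    have := hmax (K + size (perm_of l')) (conj hb p3); lia.
  + rewrite /= na nb -subn1; lia.
  + rewrite perm_of_node ea eb.
    have -> : size (take K s) = K by rewrite size_take ss; case: (ltnP K n.+2); lia.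
    by rewrite -ed cat_take_drop.
- have Pk : 0 < k < n.+2 /\ mdec s k by split.
  have [K [[hK mdK] hmax]] := maximal_ex (fun K => 0 < K < n.+2 /\ mdec s K) (n.+2) k
     Pk (fun j hj => proj2 (andP (proj1 hj))).
  have [pd' et pa] := split_m s (n.+2) K pe mdK ltac:(lia).
  set a := map (subn^~ (n.+2 - K)) (take K s) in et pa.
  have pa' : perm_eq a (iota 0 K.-1.+1) by rewrite prednK //; lia.
  have sa : sep a by apply/(sep_shift (n.+2 - K)); rewrite -et; apply: sep_take.
  have [ta [da na ea]] := IH K.-1 ltac:(rewrite -subn1; lia) _ pa' sa.
  have pb' : perm_eq (drop K s) (iota 0 (n.+1 - K).+1) by rewrite -subSn //; lia.
  have [tb [db nb eb]] := IH (n.+1 - K) ltac:(lia) _ pb' (sep_drop K s hs).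
  exists (Node ta true tb); split.
  + rewrite /= da db /=.
    case: tb db nb eb => [|l' c r'] db nb eb //.
    case: c db nb eb => // db nb eb; exfalso.
    have p1 := perm_of_mdec l' r'; rewrite eb in p1.
    have p3 := mdec_comb _ _ _ mdK p1.
    have sz := size_node_gt l' true r'; rewrite eb size_drop ss in sz.
    have hb : 0 < K + size (perm_of l') < n.+2 by lia.
    have := hmax (K + size (perm_of l')) (conj hb p3); lia.
  + rewrite /= na nb -subn1; lia.
  + rewrite perm_of_node ea eb.
    have -> : size (drop K s) = n.+2 - K by rewrite size_drop ss.
    by rewrite -et cat_take_drop.
Qed.


Fixpoint btree_eqb (t1 t2 : btree) : bool :=
  match t1, t2 with
  | Leaf, Leaf => true
  | Node l a r, Node l' a' r' => [&& btree_eqb l l', a == a' & btree_eqb r r']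
  | _, _ => false
  end.

Lemma btree_eqP : Equality.axiom btree_eqb.
Proof.
rewrite /Equality.axiom.
elim=> [|l IHl a r IHr] [|l' a' r']; try by constructor.
rewrite [btree_eqb _ _]/=.
case: (IHl l') => [<-|nl]; last by constructor => -[].
case: (a =P a') => [<-|na]; last by constructor => -[].
case: (IHr r') => [<-|nr]; last by constructor => -[].
by constructor.
Qed.

HB.instance Definition _ := hasDecEq.Build btree btree_eqP.

Lemma mem_flatten_map (T U : eqType) (F : T -> seq U) (s : seq T) (u : U) :
  (u \in flatten (map F s)) = has (fun x => u \in F x) s.
Proof. by elim: s => [//|x s IH] /=; rewrite mem_cat IH. Qed.

Lemma uniq_flatten_map (T U : eqType) (F : T -> seq U) (s : seq T) :
  uniq s -> (forall x, x \in s -> uniq (F x)) ->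
  (forall x y u, x \in s -> y \in s -> u \in F x -> u \in F y -> x = y) ->
  uniq (flatten (map F s)).
Proof.
elim: s => [//|x s IH] /= /andP[xs us] hu hk.
rewrite cat_uniq hu ?inE ?eqxx //= IH //; last first.
- by move=> y z u ys zs; apply: hk; rewrite inE ?ys ?zs orbT.
- by move=> y ys; apply: hu; rewrite inE ys orbT.
rewrite andbT; apply/hasPn => u; rewrite mem_flatten_map => /hasP[y ys uy].
apply/negP => ux.
have exy := hk x y u ltac:(by rewrite inE eqxx) ltac:(by rewrite inE ys orbT) ux uy.
by move: xs; rewrite exy ys.
Qed.

Lemma trees_unfold f k :
  trees_fuel f.+1 k.+1 =
  flatten [seq flatten [seq flatten [seq [seq Node l a r | r <- trees_fuel f (k - i)]
                                     | a <- [:: false; true]]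
                        | l <- trees_fuel f i]
          | i <- iota 0 k.+1].
Proof. by []. Qed.

Lemma mem_trees_unfold f k t :
  t \in trees_fuel f.+1 k.+1 -> exists i l a r,
    [/\ i <= k, l \in trees_fuel f i, r \in trees_fuel f (k - i) & t = Node l a r].
Proof.
rewrite trees_unfold mem_flatten_map => /hasP[i]; rewrite mem_iota => /andP[_ hi].
rewrite mem_flatten_map => /hasP[l hl]; rewrite mem_flatten_map => /hasP[a _].
move=> /mapP[r hr ->]; exists i, l, a, r; split => //; lia.
Qed.

Lemma trees_size f : forall k t, t \in trees_fuel f k -> nnodes t = k.
Proof.
elim: f => [|f IH] [|k] t //=.
- by rewrite inE => /eqP ->.
- by rewrite inE => /eqP ->.
move=> /mem_trees_unfold [i [l [a [r [hi hl hr ->]]]]] /=.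
rewrite (IH _ _ hl) (IH _ _ hr); lia.
Qed.

Definition lchild t := if t is Node l _ _ then l else Leaf.
Definition label t := if t is Node _ a _ then a else false.

Lemma trees_uniq f : forall k, uniq (trees_fuel f k).
Proof.
elim: f => [|f IH] [|k]; rewrite ?trees_unfold //.
apply: uniq_flatten_map; first exact: iota_uniq.
  move=> i _; apply: uniq_flatten_map => //.
    move=> l _; apply: uniq_flatten_map => //.
      move=> a _; rewrite map_inj_uniq //; by move=> r1 r2 [].
    move=> a b u _ _ /mapP[r1 _ ->] /mapP[r2 _ [] ->] //.
  move=> l1 l2 u _ _; rewrite !mem_flatten_map => /hasP[a1 _ /mapP[r1 _ ->]].
  by move=> /hasP[a2 _ /mapP[r2 _ []]].
move=> i j u _ _; rewrite !mem_flatten_map => /hasP[l1 hl1].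
rewrite mem_flatten_map => /hasP[a1 _ /mapP[r1 _ ->]].
move=> /hasP[l2 hl2]; rewrite mem_flatten_map => /hasP[a2 _ /mapP[r2 _ [el _ _]]].
by rewrite -(trees_size _ _ _ hl1) -(trees_size _ _ _ hl2) el.
Qed.

Lemma trees_complete f : forall t, nnodes t <= f -> t \in trees_fuel f (nnodes t).
Proof.
elim: f => [|f IH] [|l a r] //.
move=> hsz; rewrite [nnodes (Node _ _ _)]/= trees_unfold.
rewrite [nnodes (Node _ _ _)]/= in hsz.
rewrite mem_flatten_map; apply/hasP; exists (nnodes l).
  rewrite mem_iota; lia.
rewrite mem_flatten_map; apply/hasP; exists l; first by apply: IH; lia.
rewrite mem_flatten_map; apply/hasP; exists a; first by case: a.
apply/mapP; exists r => //.
have -> : nnodes l + nnodes r - nnodes l = nnodes r by lia.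
by apply: IH; lia.
Qed.

Lemma mem_disk_trees n t : (t \in disk_trees n.+1) = is_disk t && (nnodes t == n).
Proof.
rewrite /disk_trees /all_trees mem_filter /=.
case: (is_disk t) => //=.
apply/idP/eqP => [/trees_size //|<-]; exact: trees_complete.
Qed.

Lemma disk_trees_uniq n : uniq (disk_trees n).
Proof. exact/filter_uniq/trees_uniq. Qed.


Definition fseq n (p : 'S_n) : seq nat := [seq val (p i) | i <- enum 'I_n].
Arguments fseq {n}.

Lemma size_fseq n (p : 'S_n) : size (fseq p) = n.
Proof. by rewrite size_map size_enum_ord. Qed.

Lemma nth_fseq n (p : 'S_n) (i : 'I_n) : nth0 (fseq p) i = p i.
Proof. by rewrite /nth0 /fseq (nth_map i) ?size_enum_ord // nth_ord_enum. Qed.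

Lemma fseq_perm n (p : 'S_n) : perm_eq (fseq p) (iota 0 n).
Proof.
apply: perm_iota.
- rewrite map_inj_uniq ?enum_uniq // => i j /val_inj; exact: perm_inj.
- exact: size_fseq.
- by move=> x /mapP[i _ ->]; apply: ltn_ord.
Qed.

Lemma fseq_inj n : injective (@fseq n).
Proof.
move=> p q e; apply/permP => i; apply: val_inj.
have h := nth_fseq _ p i; rewrite e nth_fseq in h; exact: (esym h).
Qed.

Lemma fseq_surj n (s : seq nat) : perm_eq s (iota 0 n) -> exists p : 'S_n, fseq p = s.
Proof.
move=> pe.
have us : uniq s by rewrite (perm_uniq pe) iota_uniq.
have ss : size s = n by rewrite (perm_size pe) size_iota.
have hb : forall i : 'I_n, nth 0 s i < n.
  move=> i; have : nth 0 s i \in s by apply: mem_nth; rewrite ss.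
  by rewrite (perm_mem pe) mem_iota.
pose g (i : 'I_n) : 'I_n := insubd i (nth 0 s i).
have vg : forall i, val (g i) = nth 0 s i by move=> i; rewrite val_insubd hb.
have ginj : injective g.
  move=> i j /(congr1 val); rewrite !vg => /eqP; rewrite nth_uniq ?ss // => /eqP.
  exact: val_inj.
exists (perm ginj).
rewrite /fseq (eq_map (g := fun i : 'I_n => nth 0 s i)); last by move=> i; rewrite permE vg.
have -> : [seq nth 0 s (nat_of_ord i) | i <- enum 'I_n] = map (nth 0 s) (map val (enum 'I_n)).
  by rewrite -map_comp.
rewrite val_enum_ord -ss.
exact: mkseq_nth.
Qed.

Lemma contains2413_iff n (p : 'S_n) : contains2413 p <-> occ R2413 (fseq p).
Proof.
split.
  move=> /existsP[a /existsP[b /existsP[c /existsP[d /and5P[h1 h2 h3 h4 /andP[h5 h6]]]]]].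
  exists a, b, c, d; rewrite size_fseq !nth_fseq; split => //; rewrite /R2413; lia.
move=> [a [b [c [d [h1 h2 h3 h4 h5]]]]]; rewrite size_fseq in h4.
have ha : a < n by lia. have hb : b < n by lia. have hc : c < n by lia.
move: h5; rewrite -[a]/(val (Ordinal ha)) -[b]/(val (Ordinal hb)) -[c]/(val (Ordinal hc)).
rewrite -[d]/(val (Ordinal h4)) !nth_fseq /R2413 => h5.
apply/existsP; exists (Ordinal ha); apply/existsP; exists (Ordinal hb).
apply/existsP; exists (Ordinal hc); apply/existsP; exists (Ordinal h4).
rewrite /=; apply/and5P; split; try lia.

Qed.

Lemma contains3142_iff n (p : 'S_n) : contains3142 p <-> occ R3142 (fseq p).
Proof.
split.
  move=> /existsP[a /existsP[b /existsP[c /existsP[d /and5P[h1 h2 h3 h4 /andP[h5 h6]]]]]].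
  exists a, b, c, d; rewrite size_fseq !nth_fseq; split => //; rewrite /R3142; lia.
move=> [a [b [c [d [h1 h2 h3 h4 h5]]]]]; rewrite size_fseq in h4.
have ha : a < n by lia. have hb : b < n by lia. have hc : c < n by lia.
move: h5; rewrite -[a]/(val (Ordinal ha)) -[b]/(val (Ordinal hb)) -[c]/(val (Ordinal hc)).
rewrite -[d]/(val (Ordinal h4)) !nth_fseq /R3142 => h5.
apply/existsP; exists (Ordinal ha); apply/existsP; exists (Ordinal hb).
apply/existsP; exists (Ordinal hc); apply/existsP; exists (Ordinal h4).
rewrite /=; apply/and5P; split; try lia.

Qed.

Lemma avoids_iff n (p : 'S_n) : avoids_2413_3142 p <-> sep (fseq p).
Proof.
rewrite /avoids_2413_3142 /sep -contains2413_iff -contains3142_iff.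
split => [/andP[/negP h1 /negP h2] //|[h1 h2]].
by apply/andP; split; apply/negP.
Qed.

Lemma des_seq_count (s : seq nat) : des_seq s =
  count (fun i => (i.+1 < size s) && (nth 0 s i.+1 < nth 0 s i)) (iota 0 (size s)).
Proof.
elim: s => [//|x t IH].
rewrite [size _]/= -addn1 addnC iotaD /= add0n.
rewrite IH; congr (_ + _).
  by case: t {IH} => [//|y t] /=.
have -> : iota 1 (size t) = map (addn 1) (iota 0 (size t)) by rewrite -iotaDl.
rewrite count_map; apply: eq_count => i /=.
by rewrite /= add1n.
Qed.

Lemma des_fseq n (p : 'S_n) : des p = des_seq (fseq p).
Proof.
rewrite des_seq_count size_fseq /des -sum1dep_card.
pose P' := fun k => (k.+1 < n) && (nth 0 (fseq p) k.+1 < nth 0 (fseq p) k).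
rewrite (eq_bigl (fun i : 'I_n => P' i)); last first.
  move=> i; rewrite /P'; apply/existsP/andP.
    move=> [j /andP[/eqP ej hj]]; split; first by rewrite -ej ltn_ord.
    by rewrite -ej -!/(nth0 _ _) !nth_fseq.
  move=> [h1 h2]; exists (Ordinal h1); apply/andP; split => //.
  by move: h2; rewrite -!/(nth0 _ _) -[i.+1]/(val (Ordinal h1)) !nth_fseq.
by rewrite -(big_mkord (fun k => P' k) (fun _ => 1)) sum1_count /index_iota subn0.
Qed.


Lemma main_perm n : perm_eq (map fseq [seq p <- index_enum {perm 'I_n.+1} | avoids_2413_3142 p])
                            (map perm_of (disk_trees n.+1)).
Proof.
apply: uniq_perm.
- rewrite map_inj_uniq; last exact: fseq_inj.
  exact/filter_uniq/index_enum_uniq.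
- rewrite map_inj_in_uniq; first exact: disk_trees_uniq.
  move=> t1 t2; rewrite !mem_disk_trees => /andP[d1 _] /andP[d2 _].
  exact: perm_of_inj.
move=> s; apply/mapP/mapP.
- move=> [p]; rewrite mem_filter => /andP[ap _] ->.
  have [t [dt nt et]] := exists_tree n (fseq p) (fseq_perm _ p) (proj1 (avoids_iff _ p) ap).
  by exists t => //; rewrite mem_disk_trees dt nt eqxx.
- move=> [t]; rewrite mem_disk_trees => /andP[dt /eqP nt] ->.
  have pe : perm_eq (perm_of t) (iota 0 n.+1) by rewrite -nt; apply: perm_of_perm.
  have [p ep] := fseq_surj _ _ pe.
  exists p => //; rewrite mem_filter mem_index_enum andbT.
  by apply/(avoids_iff _ p); rewrite ep; apply: sep_perm_of.
Qed.

Local Open Scope ring_scope.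

Theorem corollary2p16 (n : nat) : (1 <= n)%N ->
  \sum_(p : 'S_n | avoids_2413_3142 p) ('X^(des p) : {poly int})
  = \sum_(T <- disk_trees n) 'X^(n_ominus T).
Proof.
case: n => [//|n] _.
rewrite -big_filter (eq_bigr (fun p => 'X^(des_seq (fseq p)))); last by move=> p _; rewrite des_fseq.
rewrite (eq_bigr (fun T => 'X^(des_seq (perm_of T)))); last by move=> T _; rewrite des_perm_of.
rewrite -(big_map fseq xpredT (fun s => 'X^(des_seq s))).
rewrite -(big_map perm_of xpredT (fun s => 'X^(des_seq s))).
exact: perm_big (main_perm n).
Qed.
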